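(* For every real $\varepsilon$ with $0<\varepsilon<1$, let $\varepsilon'=\varepsilon/(4-2\varepsilon)$ and let $S=\{p,a,b,q\}\subset\mathbb{R}$ with $p=0$, $a=\varepsilon'$, $b=1+\varepsilon'$, $q=1+2\varepsilon'$, equipped with the distance $|xy|$ equal to the absolute difference. Let $G'$ be the path $p,a,b,q$ (a $1$-spanner for $S$), and let $G$ be the graph obtained from $G'$ by the construction in the context with $f=1$ (for any tie-breaking). Then $G$ has edge set $E'\cup\{\{p,b\},\{a,q\}\}$, and for the matching $F=\{\{p,a\},\{b,q\}\}$ we have $\delta_{G\setminus F}(p,q)/\delta_{K_S\setminus F}(p,q)=3-\varepsilon$. In particular the stretch factor $3t$ in Theorem 1 cannot be replaced by any constant smaller than $3t$ in general.
   Context: For a finite metric space $(S,|\cdot|)$, $K_S$ is the complete graph on $S$ with edge weights $|xy|$; $\delta_X(x,y)$ is shortest-path distance in an edge-weighted graph $X$; $X\setminus F$ is $X$ with the edges of $F$ removed. A graph $G'$ on $S$ is a $t$-spanner if $\delta_{G'}(x,y)\le t|xy|$ for all $x,y$. Construction (with $f=1$): for each edge $\{x,y\}$ of $G'=(S,E')$, let $c_{xy}$ be a point of $S\setminus\{x,y\}$ minimizing $|xc|+|cy|$ (ties broken arbitrarily); $G=(S,E)$ with $E=E'\cup\{\{x,c_{xy}\},\{c_{xy},y\}:\{x,y\}\in E'\}$. *)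

(* Defs.v *)
From HB Require Import structures.
From mathcomp Require Import all_boot all_order all_algebra.
From mathcomp Require Import all_classical all_reals.
Set Implicit Arguments. Unset Strict Implicit. Unset Printing Implicit Defensive.
Import Order.TTheory GRing.Theory Num.Theory.
Local Open Scope classical_set_scope.
Local Open Scope ring_scope.

Section GraphDefs.
Variables (R : realType) (T : finType).

(* An undirected edge-weighted graph on T is a symmetric relation e : rel T;
   edge weights are given by the metric d. *)

Definition ueq (x y u v : T) : bool := ((x == u) && (y == v)) || ((x == v) && (y == u)).

Definition walk_len (d : T -> T -> R) (x : T) (s : seq T) : R :=
  \sum_(uv <- zip (x :: s) s) d uv.1 uv.2.

Definition sp_dist (e : rel T) (d : T -> T -> R) (x y : T) : R :=
  inf [set l | exists s : seq T, [/\ path e x s, last x s = y & l = walk_len d x s]].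

Definition complete_rel : rel T := fun x y => x != y.

Definition rem_edges (e F : rel T) : rel T := fun x y => e x y && ~~ F x y.

Definition valid_centers (d : T -> T -> R) (E' : rel T) (c : T -> T -> T) : Prop :=
  forall x y, E' x y ->
    [/\ c x y != x, c x y != y, c x y = c y x &
        forall z, z != x -> z != y -> d x (c x y) + d (c x y) y <= d x z + d z y].

Definition construct (E' : rel T) (c : T -> T -> T) : rel T := fun x y =>
  E' x y || [exists u, exists v, E' u v && (ueq x y u (c u v) || ueq x y (c u v) v)].

End GraphDefs.

Definition ip : 'I_4 := @Ordinal 4 0 isT.
Definition ia : 'I_4 := @Ordinal 4 1 isT.
Definition ib : 'I_4 := @Ordinal 4 2 isT.
Definition iq : 'I_4 := @Ordinal 4 3 isT.

Definition ex_pt (R : realType) (eps : R) (i : 'I_4) : R :=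
  let eps' := eps / (4 - 2 * eps) in
  match val i with
  | 0 => 0
  | 1 => eps'
  | 2 => 1 + eps'
  | _ => 1 + 2 * eps'
  end.

Definition ex_dist (R : realType) (eps : R) (x y : 'I_4) : R :=
  `|ex_pt eps x - ex_pt eps y|.

Definition ex_path : rel 'I_4 := fun x y => ueq x y ip ia || ueq x y ia ib || ueq x y ib iq.

Definition ex_F : rel 'I_4 := fun x y => ueq x y ip ia || ueq x y ib iq.

(* Main.v *)
Require Import Defs.
From HB Require Import structures.
From mathcomp Require Import all_boot all_order all_algebra.
From mathcomp Require Import all_classical all_reals.
From mathcomp Require Import ring lra.
Import Order.TTheory GRing.Theory Num.Theory.
Local Open Scope ring_scope.

Lemma inf_eq_of (R : realType) (A : set R) v :
  A v -> (forall x, A x -> v <= x) -> inf A = v.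
Proof.
move=> Av lb; apply/eqP; rewrite eq_le; apply/andP; split.
  by apply: ge_inf => //; exists v.
by apply: lb_le_inf; [exists v|].
Qed.

Lemma walk_lb (R : realType) (T : finType) (e : rel T) (d : T -> T -> R)
  (h : T -> R) s x : path e x s -> (forall x y, e x y -> h x - h y <= d x y) ->
  h x - h (last x s) <= walk_len d x s.
Proof.
move=> + He; elim: s x => [|y s IH] x /=.
  by rewrite /walk_len /= big_nil subrr.
move=> /andP[exy ps]; rewrite /walk_len /= big_cons /=.
have := IH y ps; rewrite /walk_len => H1; have := He _ _ exy.
move=> H2; lra.
Qed.

Lemma construct_ext (T : finType) (E' : rel T) c c' :
  (forall u v, E' u v -> c u v = c' u v) ->
  forall x y, construct E' c x y = construct E' c' x y.
Proof.
move=> H x y; rewrite /construct; congr (_ || _).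
apply: eq_existsb => u; apply: eq_existsb => v.
by case E: (E' u v) => //=; rewrite H.
Qed.

Definition c0 (z : 'I_4) (u v : 'I_4) : 'I_4 :=
  if (u == ip) || (v == ip) then ib
  else if (u == iq) || (v == iq) then ia else z.

Lemma ord4P (x : 'I_4) : [\/ x = ip, x = ia, x = ib | x = iq].
Proof.
case: x => [[|[|[|[|k]]]] hk]; last by [].
- by apply: Or41; apply: val_inj.
- by apply: Or42; apply: val_inj.
- by apply: Or43; apply: val_inj.
- by apply: Or44; apply: val_inj.
Qed.

Lemma ex4 (P : pred 'I_4) : [exists u, P u] = [|| P ip, P ia, P ib | P iq].
Proof.
apply/existsP/idP; last first.
  by case/or4P=> H; eexists; exact: H.
by case=> u; case: (ord4P u) => ->->; rewrite ?orbT.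
Qed.
Lemma constr_c0 z : z \in [:: ip; iq] -> forall x y : 'I_4,
  construct ex_path (c0 z) x y = [|| ex_path x y, ueq x y ip ib | ueq x y ia iq].
Proof.
move=> zin x y; rewrite /construct ex4.
rewrite !ex4.
move: zin; rewrite !inE => /orP[]/eqP->;
case: x => [[|[|[|[|k]]]] hk]; case: y => [[|[|[|[|l]]]] hl] //=.
Qed.


Lemma final_arith (R : realFieldType) (eps : R) : 0 < eps -> eps < 1 ->
  (3 + 2 * (eps / (4 - 2 * eps))) / (1 + 2 * (eps / (4 - 2 * eps))) = 3 - eps.
Proof.
move=> e0 e1.
have h4 : 4 - 2 * eps != 0 by rewrite subr_eq0; apply/eqP; lra.
have h5 : 1 + 2 * (eps / (4 - 2 * eps)) = 4 / (4 - 2 * eps) by field.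
have h6 : 3 + 2 * (eps / (4 - 2 * eps)) = (12 - 4 * eps) / (4 - 2 * eps) by field.
by rewrite h5 h6; field.
Qed.

Theorem mainTheorem3 (R : realType) (eps : R) (c : 'I_4 -> 'I_4 -> 'I_4) :
  0 < eps < 1 ->
  valid_centers (ex_dist eps) ex_path c ->
  (forall x y : 'I_4, construct ex_path c x y =
     [|| ex_path x y, ueq x y ip ib | ueq x y ia iq]) /\
  sp_dist (rem_edges (construct ex_path c) ex_F) (ex_dist eps) ip iq
    / sp_dist (rem_edges (@complete_rel _) ex_F) (ex_dist eps) ip iq = 3 - eps.
Proof.
move=> /andP[e0 e1] Hv.
set e' := eps / (4 - 2 * eps).
have he' : 0 < e' by rewrite /e' divr_gt0 //; lra.
have he'2 : e' < 1 by rewrite /e' ltr_pdivrMr; lra.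
have dE : forall x y, ex_dist eps x y = `|ex_pt eps x - ex_pt eps y| by [].
have P : ex_pt eps ip = 0 by [].
have A : ex_pt eps ia = e' by [].
have B : ex_pt eps ib = 1 + e' by [].
have Q : ex_pt eps iq = 1 + 2 * e' by [].
have nrm : forall r : R, 0 <= r -> `|r| = r /\ `|- r| = r.
  by move=> r r0; rewrite normrN ger0_norm.
have dpa : ex_dist eps ip ia = e' /\ ex_dist eps ia ip = e'.
  rewrite !dE P A sub0r subr0; have [-> ->] := nrm _ (ltW he'); by [].
have dab : ex_dist eps ia ib = 1 /\ ex_dist eps ib ia = 1.
  rewrite !dE A B; have -> : e' - (1 + e') = - 1 by lra.
  have -> : 1 + e' - e' = 1 by lra.
  by have [-> ->] := nrm (1 : R) ler01.
have dbq : ex_dist eps ib iq = e' /\ ex_dist eps iq ib = e'.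
  rewrite !dE B Q; have -> : 1 + e' - (1 + 2 * e') = - e' by lra.
  have -> : 1 + 2 * e' - (1 + e') = e' by lra.
  by have [-> ->] := nrm _ (ltW he').
have dpb : ex_dist eps ip ib = 1 + e' /\ ex_dist eps ib ip = 1 + e'.
  rewrite !dE P B sub0r subr0; have [-> ->] := nrm (1 + e') ltac:(lra); by [].
have daq : ex_dist eps ia iq = 1 + e' /\ ex_dist eps iq ia = 1 + e'.
  rewrite !dE A Q; have -> : e' - (1 + 2 * e') = - (1 + e') by lra.
  have -> : 1 + 2 * e' - e' = 1 + e' by lra.
  by have [-> ->] := nrm (1 + e') ltac:(lra).
have dpq : ex_dist eps ip iq = 1 + 2 * e' /\ ex_dist eps iq ip = 1 + 2 * e'.
  rewrite !dE P Q sub0r subr0; have [-> ->] := nrm (1 + 2 * e') ltac:(lra); by [].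
have cpa : c ip ia = ib.
  have [h1 h2 _ h4] := Hv ip ia isT.
  move: h1 h2 (h4 ib isT isT); case: (ord4P (c ip ia)) => ->; rewrite ?eqxx //=.
  rewrite dpq.1 daq.2 dpb.1 dab.2 => _ _ H; exfalso; lra.
have cbq : c ib iq = ia.
  have [h1 h2 _ h4] := Hv ib iq isT.
  move: h1 h2 (h4 ia isT isT); case: (ord4P (c ib iq)) => ->; rewrite ?eqxx //=.
  rewrite dpb.2 dpq.1 dab.2 daq.1 => _ _ H; exfalso; lra.
have [cap cqb] : c ia ip = ib /\ c iq ib = ia.
  have [_ _ h3 _] := Hv ip ia isT; have [_ _ h3' _] := Hv ib iq isT.
  by rewrite -h3 -h3'.
pose z := c ia ib.
have zin : z \in [:: ip; iq].
  have [h1 h2 _ _] := Hv ia ib isT; rewrite /z.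
  by move: h1 h2; case: (ord4P (c ia ib)) => ->; rewrite ?eqxx.
have cba : c ib ia = z by have [_ _ h3 _] := Hv ia ib isT; rewrite /z h3.
have part1 : forall x y : 'I_4, construct ex_path c x y =
     [|| ex_path x y, ueq x y ip ib | ueq x y ia iq].
  move=> x y; rewrite (@construct_ext _ _ c (c0 z)); first exact: constr_c0.
  move=> u v; rewrite /c0.
  by case: (ord4P u) => ->; case: (ord4P v) => -> //=.
split => //.
have -> : rem_edges (construct ex_path c) ex_F =
   rem_edges (fun x y => [|| ex_path x y, ueq x y ip ib | ueq x y ia iq]) ex_F.
  by apply/funext => x; apply/funext => y; rewrite /rem_edges part1.
have num : sp_dist (rem_edges (fun x y => [|| ex_path x y, ueq x y ip ib | ueq x y ia iq]) ex_F)
   (ex_dist eps) ip iq = 3 + 2 * e'.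
  apply: inf_eq_of.
    exists [:: ib; ia; iq]; split => //.
    rewrite /walk_len /= !big_cons big_nil /= dpb.1 dab.2 daq.1; lra.
  move=> l [s [ps ls ->]].
  pose h (x : 'I_4) : R := match val x with
    | 0 => 3 + 2 * e' | 1 => 1 + e' | 2 => 2 + e' | _ => 0 end.
  have := @walk_lb _ _ _ (ex_dist eps) h s ip ps; rewrite ls /h /= subr0; apply.
  move=> x y; case: (ord4P x) => ->; case: (ord4P y) => -> //= _;
  rewrite ?dpa.1 ?dpa.2 ?dab.1 ?dab.2 ?dbq.1 ?dbq.2 ?dpb.1 ?dpb.2
               ?daq.1 ?daq.2 ?dpq.1 ?dpq.2; lra.
have den : sp_dist (rem_edges (@complete_rel _) ex_F) (ex_dist eps) ip iq = 1 + 2 * e'.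
  apply: inf_eq_of.
    exists [:: iq]; split => //.
    rewrite /walk_len /= !big_cons big_nil /= dpq.1; lra.
  move=> l [s [ps ls ->]].
  have := @walk_lb _ _ _ (ex_dist eps) (fun x => ex_dist eps x iq) s ip ps; rewrite ls.
  have diq : ex_dist eps iq iq = 0 by rewrite dE subrr normr0.
  rewrite dpq.1 diq subr0; apply => x y _.
  rewrite !dE; have := ler_distD (ex_pt eps y) (ex_pt eps x) (ex_pt eps iq).
  move=> H; lra.
rewrite num den /e'; exact: final_arith.
Qed.
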